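(* Let $G = \bigcap_{i \in \mathcal{I}} G_i$ be a nonempty domain in $\mathbb{R}^d$, where $\mathcal{I}=\{1,\dots,\mathbf{I}\}$ is a nonempty finite index set and for each $i \in \mathcal{I}$, $G_i$ is a nonempty domain, $G_i \neq \mathbb{R}^d$, whose boundary $\partial G_i$ is $C^1$, and let $n^i(\cdot)$ denote the unit normal vector field on $\partial G_i$ pointing into $G_i$. Let $\gamma^i:\mathbb{R}^d\to\mathbb{R}^d$, $i\in\mathcal{I}$, be vector fields, and for $x\in\mathbb{R}^d$ let $\mathcal{I}(x)=\{i\in\mathcal{I}: x\in\partial G_i\}$. Then there is a constant $a \in (0,1)$ and a vector valued function $b: \partial G \to \mathbb{R}_+^{\mathbf{I}}$ such that for each $x \in \partial G$, $\sum_{i \in \mathcal{I}(x)} b_i(x) = 1$ and for each $i \in \mathcal{I}(x)$, $$b_i(x)\langle n^i(x), \gamma^i(x)\rangle \ge a + \sum_{j \in \mathcal{I}(x)\setminus\{i\}} b_j(x)\,|\langle n^j(x), \gamma^i(x)\rangle|,$$ if and only if there is a constant $a \in (0,1)$ and a vector valued function $c: \partial G \to \mathbb{R}_+^{\mathbf{I}}$ such that for each $x \in \partial G$, $\sum_{i \in \mathcal{I}(x)} c_i(x) = 1$ and for each $i \in \mathcal{I}(x)$, $$c_i(x)\langle \gamma^i(x), n^i(x)\rangle \ge a + \sum_{j \in \mathcal{I}(x)\setminus\{i\}} c_j(x)\,|\langle \gamma^j(x), n^i(x)\rangle|.$$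
   Context: $\langle\cdot,\cdot\rangle$ is the Euclidean inner product on $\mathbb{R}^d$, $\mathbb{R}_+^{\mathbf{I}}$ is the nonnegative orthant, and $\partial G$ is the boundary of $G$. *)

(* Defs.v *)
From HB Require Import structures.
From mathcomp Require Import all_boot all_order all_algebra.
From mathcomp Require Import all_classical all_reals all_analysis.
Set Implicit Arguments. Unset Strict Implicit. Unset Printing Implicit Defensive.
Import Order.TTheory GRing.Theory Num.Theory numFieldNormedType.Exports.
Local Open Scope classical_set_scope.
Local Open Scope ring_scope.

Section Defs.
Variables (R : realType) (d : nat).
Notation V := 'rV[R]_d.

Definition dotp (u v : V) : R := \sum_(k < d) u ord0 k * v ord0 k.
Definition enorm (u : V) : R := Num.sqrt (dotp u u).

Definition bdry (A : set V) : set V := closure A `\` interior A.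

Definition domain (A : set V) : Prop := [/\ A !=set0, open A & connected A].

Definition partial (f : V -> R) (k : 'I_d) (x : V) : R :=
  'D_(delta_mx ord0 k) f x.
Definition grad (f : V -> R) (x : V) : V := \row_k partial f k x.

Definition C1_on (U : set V) (f : V -> R) : Prop :=
  (forall y, U y -> differentiable f y) /\
  (forall k y, U y -> {for y, continuous (partial f k)}).

Definition local_defining (A : set V) (x : V) (U : set V) (phi : V -> R) : Prop :=
  [/\ open U, U x, C1_on U phi, grad phi x != 0 &
      forall y, U y -> (A y <-> 0 < phi y)].

Definition C1_boundary (A : set V) : Prop :=
  forall x, bdry A x -> exists U phi, local_defining A x U phi.

Definition inward_unit_normal (A : set V) (n : V -> V) : Prop :=
  forall x, bdry A x -> exists U phi, local_defining A x U phi /\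
    n x = (enorm (grad phi x))^-1 *: grad phi x.

Definition active (I : nat) (G : 'I_I -> set V) (x : V) (i : 'I_I) : bool :=
  `[< bdry (G i) x >].

Definition bigG (I : nat) (G : 'I_I -> set V) : set V := \bigcap_(i in setT) G i.

End Defs.

(* Main.v *)
Require Import Defs.
From HB Require Import structures.
From mathcomp Require Import all_boot all_order all_algebra.
From mathcomp Require Import all_classical all_reals all_analysis.
From mathcomp Require Import ring lra.
Import Order.TTheory GRing.Theory Num.Theory numFieldNormedType.Exports.
Local Open Scope classical_set_scope.
Local Open Scope ring_scope.
Local Close Scope classical_set_scope.

Lemma solveZ (T : finType) (R : realFieldType) (k : nat) : forall (S : {set T})
  (A : T -> T -> R) (b v : T -> R), (#|S| < k)%N ->
  (forall i j, i \in S -> j \in S -> i != j -> A i j <= 0) ->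
  (forall i, i \in S -> 0 <= b i) ->
  (forall j, j \in S -> 0 < \sum_(i in S) b i * A i j) ->
  (forall i, i \in S -> 0 <= v i) ->
  exists c : T -> R, (forall j, j \in S -> 0 <= c j) /\
    forall i, i \in S -> \sum_(j in S) A i j * c j = v i.
Proof.
elim: k => // k IH S A b v cardS HZ Hb Hcol Hv.
have [->|[p pS]] := set_0Vmem S.
  by exists (fun _ => 0); split => i; rewrite inE.
set S' := S :\ p.
have S'E j : (j \in S') = (j != p) && (j \in S) by rewrite in_setD1.
have cardS' : (#|S'| < k)%N.
  by move: cardS; rewrite (cardsD1 p S) pS.
have Hcolp := Hcol p pS; rewrite (big_setD1 p pS) /= -/S' in Hcolp.
have sle0 : \sum_(i in S') b i * A i p <= 0.
  apply: sumr_le0 => i; rewrite S'E => /andP[ip iS].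
  by rewrite mulr_ge0_le0 // ?Hb // HZ.
have bA : 0 < b p * A p p by lra.
have bp := Hb p pS.
have App : 0 < A p p by nra.
have Ann : A p p != 0 by rewrite gt_eqF.
pose A' i j := A i j - A i p * A p j / A p p.
pose v' i := v i - A i p * v p / A p p.
have [c' [c'0 c'E]] : exists c : T -> R, (forall j, j \in S' -> 0 <= c j) /\
    forall i, i \in S' -> \sum_(j in S') A' i j * c j = v' i.
  apply: (IH S' A' b v' cardS').
  - move=> i j; rewrite !S'E => /andP[ip iS] /andP[jp jS] ij.
    rewrite /A'; have h1 := HZ i j iS jS ij.
    have h2 : 0 <= A i p * A p j / A p p.
      apply: divr_ge0; last exact: ltW.
      by apply: mulr_le0; apply: HZ => //; rewrite eq_sym.
    lra.
  - by move=> i; rewrite S'E => /andP[_]; apply: Hb.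
  - move=> j; rewrite S'E => /andP[jp jS].
    have Hj := Hcol j jS; rewrite (big_setD1 p pS) /= -/S' in Hj.
    have -> : \sum_(i in S') b i * A' i j =
      \sum_(i in S') b i * A i j - A p j / A p p * \sum_(i in S') b i * A i p.
      rewrite mulr_sumr -sumrB; apply: eq_bigr => i _; rewrite /A'; field; done.
    set X := \sum_(i in S') b i * A i p in Hcolp sle0 *.
    have Apj : A p j <= 0 by rewrite HZ // eq_sym.
    have h : 0 <= (- (A p j / A p p)) * (X + b p * A p p).
      apply: mulr_ge0; last lra.
      by rewrite oppr_ge0; apply: mulr_le0_ge0 => //; rewrite invr_ge0 ltW.
    have e : A p j / A p p * (X + b p * A p p) = A p j / A p p * X + b p * A p j.
      by field.
    lra.
  - move=> i; rewrite S'E => /andP[ip iS]; rewrite /v'.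
    have h1 := Hv i iS; have h2 := Hv p pS.
    have h3 : A i p * v p / A p p <= 0.
      by rewrite pmulr_lle0 ?invr_gt0 // mulr_le0_ge0 // HZ.
    lra.
pose Y := \sum_(j in S') A p j * c' j.
pose cp := (v p - Y) / A p p.
exists (fun j => if j == p then cp else c' j).
have sumE (F : T -> R) : \sum_(j in S') F j * (if j == p then cp else c' j)
    = \sum_(j in S') F j * c' j.
  by apply: eq_bigr => j; rewrite S'E => /andP[/negbTE -> _].
split.
  move=> j jS; case: eqP => [_|/eqP jp].
    rewrite /cp; apply: divr_ge0; last exact: ltW.
    have : Y <= 0.
      apply: sumr_le0 => j'; rewrite S'E => /andP[jp' jS'].
      by rewrite mulr_le0_ge0 // ?HZ // 1?eq_sym // c'0 // S'E jp'.
    have := Hv p pS; lra.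
  by apply: c'0; rewrite S'E jp.
move=> i iS; rewrite (big_setD1 p pS) /= -/S' eqxx sumE.
case: (eqVneq i p) => [->|ip].
  rewrite -/Y /cp; field; done.
have := c'E i; rewrite S'E ip iS => /(_ isT).
have -> : \sum_(j in S') A' i j * c' j =
   \sum_(j in S') A i j * c' j - A i p / A p p * Y.
  rewrite /Y mulr_sumr -sumrB; apply: eq_bigr => j _; rewrite /A'; field; done.
rewrite /v' /cp => e.
set X := \sum_(j in S') A i j * c' j in e *.
have e2 : X = v i - A i p * v p / A p p + A i p / A p p * Y by lra.
rewrite e2; field; done.
Qed.
Lemma normZ (T : finType) (R : realFieldType) (S : {set T})
  (A : T -> T -> R) (a : R) (b : T -> R) : 0 < a ->
  (forall i j, i \in S -> j \in S -> i != j -> A i j <= 0) ->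
  (forall i, i \in S -> 0 <= b i) ->
  \sum_(i in S) b i = 1 ->
  (forall j, j \in S -> a <= \sum_(i in S) b i * A i j) ->
  exists c : T -> R, (forall j, 0 <= c j) /\ \sum_(i in S) c i = 1 /\
    forall i, i \in S -> a <= \sum_(j in S) A i j * c j.
Proof.
move=> a0 HZ Hb Hs Hcol.
have [c0 [c00 c0E]] := @solveZ T R #|S|.+1 S A b (fun _ => 1) (ltnSn _) HZ Hb
  (fun j jS => lt_le_trans a0 (Hcol j jS)) (fun _ _ => ler01).
set s := \sum_(j in S) c0 j.
have key : 1 = \sum_(j in S) c0 j * \sum_(i in S) b i * A i j.
  rewrite -Hs; under eq_bigr => i iS do rewrite -[b i]mulr1 -(c0E i iS) mulr_sumr.
  rewrite exchange_big /=; apply: eq_bigr => j _; rewrite mulr_sumr.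
  by apply: eq_bigr => i _; ring.
have s0 : 0 <= s by apply: sumr_ge0.
have as1 : a * s <= 1.
  rewrite key /s mulr_sumr; apply: ler_sum => j jS.
  by rewrite mulrC ler_wpM2l // ?(c00 j jS) // Hcol.
have sn0 : s != 0.
  apply/eqP => s0'.
  have H := psumr_eq0P (fun j jS => c00 j jS) s0'.
  have : (1:R) = 0 by rewrite key big1 // => j jS; rewrite H // mul0r.
  by move/eqP; rewrite oner_eq0.
have spos : 0 < s by rewrite lt_neqAle eq_sym sn0.
exists (fun i => if i \in S then c0 i / s else 0); split; [|split].
- by move=> j; case: ifP => // jS; rewrite divr_ge0 // ?(c00 j jS) // ltW.
- rewrite -[1](divff sn0) /s mulr_suml; apply: eq_bigr => i -> //.
- move=> i iS; have -> : \sum_(j in S) A i j * (if j \in S then c0 j / s else 0)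
     = (\sum_(j in S) A i j * c0 j) / s.
    by rewrite mulr_suml; apply: eq_bigr => j ->; rewrite mulrA.
  by rewrite c0E // ler_pdivlMr.
Qed.
Definition Qc (R : realFieldType) (X : Type) (I : nat) (act : X -> 'I_I -> bool)
  (bd : X -> Prop) (K : X -> 'I_I -> 'I_I -> R) : Prop :=
  exists (a : R) (b : X -> 'I_I -> R),
     [/\ 0 < a, a < 1 &
     forall x, bd x ->
       (forall i, 0 <= b x i) /\
       (\sum_(i | act x i) b x i = 1) /\
       (forall i, act x i ->
          b x i * K x i i >=
          a + \sum_(j | act x j && (j != i)) b x j * `|K x j i|)].

Lemma sum_S1 (T : finType) (R : realFieldType) (P : pred T) i (F : T -> R) :
  P i -> \sum_(j in [set j | P j]) F j = F i + \sum_(j | P j && (j != i)) F j.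
Proof.
move=> Pi; rewrite (big_setD1 i) ?inE //; congr (_ + _).
by apply: eq_bigl => j; rewrite !inE andbC.
Qed.

Lemma Qtrans (R : realFieldType) (X : Type) (I : nat) act bd K :
  @Qc R X I act bd K -> @Qc R X I act bd (fun x j i => K x i j).
Proof.
move=> [a [b [a0 a1 H]]]; exists a.
have [c Hc] : exists c : X -> 'I_I -> R, forall x, bd x ->
       (forall i, 0 <= c x i) /\
       (\sum_(i | act x i) c x i = 1) /\
       (forall i, act x i ->
          c x i * K x i i >=
          a + \sum_(j | act x j && (j != i)) c x j * `|K x i j|).
  suff hh : forall x, exists cx : 'I_I -> R, bd x ->
       (forall i, 0 <= cx i) /\
       (\sum_(i | act x i) cx i = 1) /\
       (forall i, act x i ->
          cx i * K x i i >=
          a + \sum_(j | act x j && (j != i)) cx j * `|K x i j|).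
    by case: (choice hh) => f hf; exists f.
  move=> x.
  case: (pselect (bd x)) => [bx|nb]; last by exists (fun _ => 0).
  have [Hb [Hs Hi]] := H x bx.
  pose S := [set i | act x i].
  pose A j i := if j == i then K x i i else - `|K x j i|.
  have [c [c0 [cs cr]]] : exists c : 'I_I -> R, (forall j, 0 <= c j) /\
      \sum_(i in S) c i = 1 /\
      forall i, i \in S -> a <= \sum_(j in S) A i j * c j.
    apply: (@normZ _ _ S A a (b x)) => //.
    - by move=> i j _ _ ij; rewrite /A (negbTE ij) oppr_le0.
    - by rewrite -Hs; apply: eq_bigl => i; rewrite inE.
    - move=> j; rewrite inE => jS; rewrite (@sum_S1 _ _ _ j _ jS) /A eqxx.
      have -> : \sum_(i | act x i && (i != j)) b x i *
                 (if i == j then K x j j else - `|K x i j|)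
              = - \sum_(i | act x i && (i != j)) b x i * `|K x i j|.
        rewrite -sumrN; apply: eq_bigr => i /andP[_ /negbTE ->]; by rewrite mulrN.
      have := Hi j jS; lra.
  exists c => _; split=> //; split.
    by rewrite -cs; apply: eq_bigl => i; rewrite inE.
  move=> i iS; have := cr i; rewrite inE => /(_ iS).
  rewrite (@sum_S1 _ _ _ i _ iS) /A eqxx.
  have -> : \sum_(j | act x j && (j != i))
       (if i == j then K x j j else - `|K x i j|) * c j
      = - \sum_(j | act x j && (j != i)) c j * `|K x i j|.
    rewrite -sumrN; apply: eq_bigr => j /andP[_ ji].
    by rewrite eq_sym (negbTE ji) mulNr mulrC.
  rewrite mulrC; lra.
by exists c; split.
Qed.

Lemma dotpC (R : realType) (d : nat) (u v : 'rV[R]_d) : dotp u v = dotp v u.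
Proof. by apply: eq_bigr => k _; rewrite mulrC. Qed.

Local Open Scope classical_set_scope.
Local Open Scope ring_scope.

Theorem lemma3p1 (R : realType) (d I : nat) (G : 'I_I -> set 'rV[R]_d)
    (n gamma : 'I_I -> 'rV[R]_d -> 'rV[R]_d) :
  (0 < I)%N ->
  domain (bigG G) ->
  (forall i, domain (G i)) ->
  (forall i, G i <> setT) ->
  (forall i, C1_boundary (G i)) ->
  (forall i, inward_unit_normal (G i) (n i)) ->
  (exists (a : R) (b : 'rV[R]_d -> 'I_I -> R),
     [/\ 0 < a, a < 1 &
     forall x, bdry (bigG G) x ->
       (forall i, 0 <= b x i) /\
       (\sum_(i | active G x i) b x i = 1) /\
       (forall i, active G x i ->
          b x i * dotp (n i x) (gamma i x) >=
          a + \sum_(j | active G x j && (j != i))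
                b x j * `|dotp (n j x) (gamma i x)|)])
  <->
  (exists (a : R) (c : 'rV[R]_d -> 'I_I -> R),
     [/\ 0 < a, a < 1 &
     forall x, bdry (bigG G) x ->
       (forall i, 0 <= c x i) /\
       (\sum_(i | active G x i) c x i = 1) /\
       (forall i, active G x i ->
          c x i * dotp (gamma i x) (n i x) >=
          a + \sum_(j | active G x j && (j != i))
                c x j * `|dotp (gamma j x) (n i x)|)]).
Proof.
move=> _ _ _ _ _ _.
change (@Qc R _ I (active G) (bdry (bigG G)) (fun x j i => dotp (n j x) (gamma i x)) <->
        @Qc R _ I (active G) (bdry (bigG G)) (fun x j i => dotp (gamma j x) (n i x))).
have -> : (fun x j i => dotp (gamma j x) (n i x)) = (fun x j i => dotp (n i x) (gamma j x)).
  by apply/funext => x; apply/funext => j; apply/funext => i; rewrite dotpC.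
split; first exact: Qtrans.
by move/Qtrans.
Qed.
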